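(* Let $R$ be a weakly $r$-clean ring whose only idempotents are $0$ and $1$. Then the center $Z(R)=\{z\in R: zx=xz \text{ for all } x\in R\}$ of $R$ is a weakly $r$-clean ring.
   Context: Rings are associative with identity. $Idem(R)$ denotes the idempotents of $R$ and $Reg(R)=\{r\in R:\ r=ryr \text{ for some } y\in R\}$ its regular elements. An element $x\in R$ is weakly $r$-clean if $x=r+e$ or $x=r-e$ for some $r\in Reg(R)$, $e\in Idem(R)$; $R$ is weakly $r$-clean if all its elements are weakly $r$-clean. *)

(* Defs.v *)
From mathcomp Require Import all_boot all_algebra.
Set Implicit Arguments. Unset Strict Implicit. Unset Printing Implicit Defensive.
Import GRing.Theory.
Local Open Scope ring_scope.

(* Notions relative to a subset S of a ring R (S will be R itself or its
   center Z(R), which is a subring; all operations of Z(R) are those of R). *)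

Definition idem_in (R : pzRingType) (S : R -> Prop) (e : R) : Prop :=
  S e /\ e * e = e.

Definition reg_in (R : pzRingType) (S : R -> Prop) (r : R) : Prop :=
  S r /\ exists y : R, S y /\ r = r * y * r.

Definition weakly_r_clean_elt_in (R : pzRingType) (S : R -> Prop) (x : R) : Prop :=
  exists r e : R, reg_in S r /\ idem_in S e /\ (x = r + e \/ x = r - e).

Definition weakly_r_clean_in (R : pzRingType) (S : R -> Prop) : Prop :=
  forall x : R, S x -> weakly_r_clean_elt_in S x.

Definition whole (R : pzRingType) : R -> Prop := fun _ => True.

Definition weakly_r_clean (R : pzRingType) : Prop := weakly_r_clean_in (@whole R).

Definition center (R : pzRingType) : R -> Prop :=
  fun z => forall x : R, z * x = x * z.

(* Main.v *)
Require Import Defs.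
From mathcomp Require Import all_boot all_algebra.
Local Open Scope ring_scope.
Import GRing.Theory.

Theorem theorem2p17 (R : pzRingType) :
  weakly_r_clean R ->
  (forall e : R, e * e = e -> e = 0 \/ e = 1) ->
  weakly_r_clean_in (@center R).
Proof.
move=> Hw Hid z Hz.
have [r [e [[_ [y [_ Hr]]] [[_ He] Hx]]]] := Hw z I.
have Ce : center e.
  by case: (Hid e He) => -> x; rewrite ?mul0r ?mulr0 ?mul1r ?mulr1.
have Cr : center r.
  case: Hx => Hx x.
  - have -> : r = z - e by rewrite Hx addrK.
    by rewrite mulrBl mulrBr Hz Ce.
  - have -> : r = z + e by rewrite Hx subrK.
    by rewrite mulrDl mulrDr Hz Ce.
have Hry : (r * y) * (r * y) = r * y by rewrite mulrA -Hr.
exists r, e; split; last by split.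
split => //.
case: (Hid _ Hry) => H.
- exists 0; split; first by move=> x; rewrite mul0r mulr0.
  by rewrite mulr0 mul0r {1}Hr H mul0r.
- exists y; split => //.
  have Hyr : y * r = 1 by rewrite -Cr.
  move=> x.
  by rewrite -[y * x]mulr1 -H !mulrA -(mulrA y x r) -Cr mulrA Hyr mul1r.
Qed.
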